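(* Central permutation fails in general: there exist a language $L$, an $L$-algebra $\mathfrak A$ with universe $A$, and elements $a,b,c,d\in A$ such that $a:b\approx_{\mathfrak A}c:d$ holds but $a:c\approx_{\mathfrak A}b:d$ does not hold.
   Context: Let $L$ be a language of algebras: a set of function symbols, each with an arity in $\mathbb N$ (constants are 0-ary function symbols). Fix a countably infinite set $X$ of variables; $T_{L,X}$ is the set of $L$-terms over $X$, and $X(s)$ denotes the set of variables occurring in a term $s$. For an $L$-algebra $\mathfrak A$ with universe $A$, every term $s$ induces a function $s^{\mathfrak A}$, evaluated at assignments of elements of $A$ to variables. An arrow of $\mathfrak A$ is a pair $(a,b)\in A\times A$, written $a\to b$. The generalizations of an arrow $a\to b$ in $\mathfrak A$ are the pairs of arbitrary terms $s\to t$ with $s,t\in T_{L,X}$ such that there is an assignment $\sigma$ of elements of $A$ to the variables in $X(s)\cup X(t)$ with $s^{\mathfrak A}(\sigma)=a$ and $t^{\mathfrak A}(\sigma)=b$; their set is denoted $\uparrow_{\mathfrak A}(a\to b)$. For $L$-algebras $\mathfrak A,\mathfrak B$, an arrow $a\to b$ of $\mathfrak A$ and an arrow $c\to d$ of $\mathfrak B$, set $(a\to b)\uparrow_{(\mathfrak A,\mathfrak B)}(c\to d):=\uparrow_{\mathfrak A}(a\to b)\cap\uparrow_{\mathfrak B}(c\to d)$. A pair of terms $s\to t$ is trivial in $(\mathfrak A,\mathfrak B)$ if it belongs to $\uparrow_{\mathfrak A}(e)$ for every arrow $e$ of $\mathfrak A$ and to $\uparrow_{\mathfrak B}(e')$ for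 every arrow $e'$ of $\mathfrak B$. We write $a\to b\lesssim_{(\mathfrak A,\mathfrak B)}c\to d$ iff either (i) every element of $\uparrow_{\mathfrak A}(a\to b)\cup\uparrow_{\mathfrak B}(c\to d)$ is trivial in $(\mathfrak A,\mathfrak B)$, or (ii) $(a\to b)\uparrow_{(\mathfrak A,\mathfrak B)}(c\to d)$ contains an element not trivial in $(\mathfrak A,\mathfrak B)$ and, for every arrow $c'\to d'$ of $\mathfrak B$, the inclusion $(a\to b)\uparrow_{(\mathfrak A,\mathfrak B)}(c\to d)\subseteq(a\to b)\uparrow_{(\mathfrak A,\mathfrak B)}(c'\to d')$ implies equality of these two sets. Define $a\to b\approx_{(\mathfrak A,\mathfrak B)}c\to d$ iff $a\to b\lesssim_{(\mathfrak A,\mathfrak B)}c\to d$ and $c\to d\lesssim_{(\mathfrak B,\mathfrak A)}a\to b$. For $a,b\in A$ and $c,d\in B$, the similarity-based analogical proportion $a:b\approx_{(\mathfrak A,\mathfrak B)}c:d$ holds iff $a\to b\approx_{(\mathfrak A,\mathfrak B)}c\to d$ and $b\to a\approx_{(\mathfrak A,\mathfrak B)}d\to c$. We write $\approx_{\mathfrak A}$ for $\approx_{(\mathfrak A,\mathfrak A)}$. *)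

(* Defs.v *)
From Stdlib Require Import Fin.

Set Implicit Arguments.

Record language := Language { symb : Type; arity : symb -> nat }.

Inductive term (L : language) : Type :=
| Var : nat -> term L
| App : forall f : symb L, (Fin.t (@arity L f) -> term L) -> term L.

Record algebra (L : language) := Algebra {
  carrier :> Type;
  op : forall f : symb L, (Fin.t (@arity L f) -> carrier) -> carrier }.

Fixpoint eval (L : language) (A : algebra L) (sigma : nat -> carrier A)
  (s : term L) : carrier A :=
  match s with
  | Var _ x => sigma x
  | App f args => op A f (fun i => eval A sigma (args i))
  end.

(* Generalizations of the arrow a -> b in A: pairs of terms (s, t). *)
Definition up (L : language) (A : algebra L) (a b : carrier A)
  (p : term L * term L) : Prop :=
  exists sigma : nat -> carrier A, eval A sigma (fst p) = a /\ eval A sigma (snd p) = b.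

Definition upAB (L : language) (A B : algebra L) (a b : carrier A) (c d : carrier B)
  (p : term L * term L) : Prop := up A a b p /\ up B c d p.

Definition trivial (L : language) (A B : algebra L) (p : term L * term L) : Prop :=
  (forall e1 e2 : carrier A, up A e1 e2 p) /\ (forall e1 e2 : carrier B, up B e1 e2 p).

Definition lesssim (L : language) (A B : algebra L) (a b : carrier A) (c d : carrier B)
  : Prop :=
  (forall p, up A a b p \/ up B c d p -> trivial A B p)
  \/
  ((exists p, upAB A B a b c d p /\ ~ trivial A B p) /\
   forall c' d' : carrier B,
     (forall p, upAB A B a b c d p -> upAB A B a b c' d' p) ->
     (forall p, upAB A B a b c' d' p <-> upAB A B a b c d p)).

Definition approx_arrow (L : language) (A B : algebra L) (a b : carrier A)
  (c d : carrier B) : Prop :=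
  lesssim A B a b c d /\ lesssim B A c d a b.

Definition analogy (L : language) (A B : algebra L) (a b : carrier A)
  (c d : carrier B) : Prop :=
  approx_arrow A B a b c d /\ approx_arrow A B b a d c.

(* Main.v *)
Require Import Defs.
From Stdlib Require Import Arith PeanoNat.

Definition L0 : language := Language (fun _ : Empty_set => 0).
Definition A0 : algebra L0 := @Algebra L0 nat (fun f => match f with end).

Lemma term_var (t : term L0) : exists n, t = Var L0 n.
Proof. destruct t as [n|f args]. - eauto. - destruct f. Qed.

Lemma dich (p : term L0 * term L0) :
  trivial A0 A0 p \/ (forall a b : carrier A0, up A0 a b p -> a = b).
Proof.
  destruct p as [s t].
  destruct (term_var s) as [x ->]; destruct (term_var t) as [y ->].
  destruct (Nat.eq_dec x y) as [<-|Hxy].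
  - right. intros a b [sg [H1 H2]]. simpl in *. congruence.
  - left. assert (H : forall e1 e2 : carrier A0, up A0 e1 e2 (Var L0 x, Var L0 y)).
    { intros e1 e2. exists (fun z => if Nat.eq_dec z x then e1 else e2).
      simpl. destruct (Nat.eq_dec x x) as [_|n]; [|congruence].
      destruct (Nat.eq_dec y x) as [e|_]; [congruence|]. auto. }
    split; exact H.
Qed.

Lemma less_neq (a b c d : nat) : a <> b -> c <> d -> lesssim A0 A0 a b c d.
Proof.
  intros Hab Hcd. left. intros p Hp.
  destruct (dich p) as [T|E]; [exact T|].
  exfalso. destruct Hp as [Hp|Hp]; apply E in Hp; auto.
Qed.

Theorem theorem3 :
  exists (L : language) (A : algebra L) (a b c d : carrier A),
    analogy A A a b c d /\ ~ analogy A A a c b d.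
Proof.
  exists L0, A0, 0, 1, 0, 2. split.
  - repeat split; apply less_neq; discriminate.
  - intros [[H _] _]. destruct H as [H|[[p [[_ Hp] Hn]] _]].
    + assert (Hu : up A0 0 0 (Var L0 0, Var L0 0)) by (exists (fun _ => 0); auto).
      destruct (H _ (or_introl Hu)) as [T _].
      destruct (T 0 1) as [sg [H1 H2]]. simpl in *. congruence.
    + destruct (dich p) as [T|E]; [contradiction|].
      apply E in Hp. discriminate.
Qed.
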